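(* The following hold: (1) If $C$ is a one-sided error PACA with time complexity $T$, then there is a two-sided error PACA $C'$ with time complexity $O(T)$ such that $L(C')=L(C)$. (2) There is a language $L$ that is accepted by some constant-time two-sided error PACA but is not accepted by any one-sided error PACA with time complexity $T(n)=o(\sqrt{n})$.
   Context: A (bounded, one-dimensional) cellular automaton (CA) has a finite state set $Q$, a boundary symbol $\$\notin Q$, and a local transition function $\delta\colon Q_\$\times Q\times Q_\$\to Q$ where $Q_\$=Q\cup\{\$\}$. On a configuration $s=s_0\cdots s_{n-1}\in Q^n$ the global map is $\Delta(s)=\delta(\$,s_0,s_1)\,\delta(s_0,s_1,s_2)\cdots\delta(s_{n-2},s_{n-1},\$)$; cell $i$ is position $i\in\{0,\dots,n-1\}$. A PACA (probabilistic ACA) $C$ has a finite state set $Q$, an input alphabet $\Sigma\subseteq Q$, a set $A\subseteq Q$ of accepting states and two local transition functions $\delta_0,\delta_1$; at every step every cell independently tosses a fair coin $c\in\{0,1\}$ and updates its state by $\delta_c$ (applied to its left neighbor, itself, its right neighbor, with $\$$ beyond the borders). On input $x\in\Sigma^n$ the initial configuration is $x$; a computation is accepting if at some step all $n$ cells are simultaneously in $A$. $C$ has time complexity $T\colon\mathbb N_+\to\mathbb N_0$ if for every input $x$ of length $n$ every accepting computation reaches $A^n$ for the first time at a step $<T(n)$; then the coin tosses may be viewed as a matrix $R\in\{0,1\}^{T(n)\times n}$ ($R_j(i)$ = coin of cell $i$ in step $j$), and $C(x,R)\in\{0,1\}$ indicates acceptance; probabilities are over uniformly random $R$. For $p\in[0,1)$,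 $C$ is a one-sided $p$-error PACA for $L$ if for all $x$: $x\in L\iff\Pr[C(x,R)=1]\ge 1-p$ and $x\notin L\iff \Pr[C(x,R)=1]=0$; a one-sided error PACA means $p=1/2$. For $p<1/2$, $C$ is a two-sided $p$-error PACA for $L$ if $x\in L\iff\Pr[C(x,R)=1]\ge1-p$ and $x\notin L\iff\Pr[C(x,R)=1]\le p$; a two-sided error PACA means $p=1/3$. In both cases $L(C)=L$. Languages are subsets of $\Sigma^+$ (the empty word is never considered). A PACA is constant-time if its time complexity is bounded by a constant. *)

(* Defs.v *)
From HB Require Import structures.
From mathcomp Require Import all_boot all_order all_algebra.
Set Implicit Arguments. Unset Strict Implicit. Unset Printing Implicit Defensive.
Import Order.TTheory GRing.Theory Num.Theory.

(* The input alphabet is a subset of the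
   state set; we model Sigma ⊆ Q by an injective embedding [inp].
   The boundary symbol $ is [None] (neighbours have type [option st]). *)
Record PACA (Sigma : finType) := MkPACA {
  st : finType;
  inp : Sigma -> st;
  inp_inj : injective inp;
  acc : {set st};
  delta0 : option st -> st -> option st -> st;
  delta1 : option st -> st -> option st -> st
}.

Section PACADefs.
Variables (Sigma : finType) (C : PACA Sigma).

Definition gstep (coin : nat -> bool) (s : seq (st C)) : seq (st C) :=
  map (fun p : nat * st C =>
         let (i, q) := p in
         let l := if i is k.+1 then nth None (map Some s) k else None in
         let r := nth None (map Some s) i.+1 in
         (if coin i then @delta1 _ C else @delta0 _ C) l q r)
      (zip (iota 0 (size s)) s).

Fixpoint run (r : nat -> nat -> bool) (s : seq (st C)) (j : nat) : seq (st C) :=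
  if j is j'.+1 then gstep (r j') (run r s j') else s.

Definition all_acc (s : seq (st C)) : bool := all (fun q => q \in @acc _ C) s.

Definition init (x : seq Sigma) : seq (st C) := map (@inp _ C) x.

Definition has_time (T : nat -> nat) : Prop :=
  forall x : seq Sigma, 0 < size x ->
  forall (r : nat -> nat -> bool) (j : nat),
    all_acc (run r (init x) j) ->
    exists2 j', j' < T (size x) & all_acc (run r (init x) j').

Definition coins (t n : nat) (R : {ffun 'I_t * 'I_n -> bool}) : nat -> nat -> bool :=
  fun j i => match insub j, insub i with
             | Some j', Some i' => R (j', i')
             | _, _ => false
             end.

Definition accepts (T : nat -> nat) (x : seq Sigma)
    (R : {ffun 'I_(T (size x)) * 'I_(size x) -> bool}) : bool :=
  [exists j : 'I_(T (size x)), all_acc (run (coins R) (init x) j)].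

Definition acc_prob (T : nat -> nat) (x : seq Sigma) : rat :=
  (#|[set R : {ffun 'I_(T (size x)) * 'I_(size x) -> bool} | accepts R]|%:R
    / (2 ^ (T (size x) * size x))%:R)%R.

(* Languages are subsets of Sigma^+; only nonempty words are constrained. *)
Definition one_sided_p (T : nat -> nat) (p : rat) (L : seq Sigma -> Prop) : Prop :=
  has_time T /\
  forall x : seq Sigma, 0 < size x ->
    (L x <-> (1 - p <= acc_prob T x)%R) /\ (~ L x <-> acc_prob T x = 0%R).

Definition two_sided_p (T : nat -> nat) (p : rat) (L : seq Sigma -> Prop) : Prop :=
  has_time T /\
  forall x : seq Sigma, 0 < size x ->
    (L x <-> (1 - p <= acc_prob T x)%R) /\ (~ L x <-> (acc_prob T x <= p)%R).

Definition one_sided (T : nat -> nat) (L : seq Sigma -> Prop) : Prop :=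
  one_sided_p T (1 / 2)%R L.

Definition two_sided (T : nat -> nat) (L : seq Sigma -> Prop) : Prop :=
  two_sided_p T (1 / 3)%R L.

End PACADefs.

Definition bigO (f g : nat -> nat) : Prop :=
  exists c N, forall n, N <= n -> 0 < n -> f n <= c * g n.

(* T(n) = o(sqrt n): for every k >= 1, eventually k*T(n) <= sqrt n,
   i.e. (k*T(n))^2 <= n. *)
Definition little_o_sqrt (T : nat -> nat) : Prop :=
  forall k, 0 < k -> exists N, forall n, N <= n -> (k * T n) ^ 2 <= n.

(* Main.v *)
Require Import Defs.
From mathcomp Require Import all_boot all_order all_algebra.
From mathcomp Require Import zify ring lra.
From Stdlib Require Import FunctionalExtensionality Classical.
Set Implicit Arguments. Unset Strict Implicit. Unset Printing Implicit Defensive.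

Section Gen.
Variables (Sigma : finType) (C : PACA Sigma).

Definition nb (s : seq (st C)) k := nth None (map Some s) k.

Lemma nbE d s k : nb s k = if k < size s then Some (nth d s k) else None.
Proof.
rewrite /nb; case: ltnP => h; first by rewrite (nth_map d).
by rewrite nth_default // size_map.
Qed.

Lemma size_gstep coin (s : seq (st C)) : size (gstep coin s) = size s.
Proof. by rewrite /gstep size_map size_zip size_iota minnn. Qed.

Lemma nth_gstep coin (s : seq (st C)) d d' i : i < size s ->
  nth d' (gstep coin s) i =
  (if coin i then @delta1 _ C else @delta0 _ C)
    (if i is k.+1 then nb s k else None) (nth d s i) (nb s i.+1).
Proof.
move=> hi; rewrite /gstep (nth_map (0, d)) ?size_zip ?size_iota ?minnn //.
by rewrite nth_zip ?size_iota // nth_iota.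
Qed.

Lemma size_run r (s : seq (st C)) j : size (run r s j) = size s.
Proof. by elim: j => //= j IH; rewrite size_gstep. Qed.

Lemma run_local r (s1 s2 : seq (st C)) d t : size s1 = size s2 -> forall c, c < size s1 ->
 (forall e, c <= e + t -> e <= c + t -> nth d s1 e = nth d s2 e) ->
 nth d (run r s1 t) c = nth d (run r s2 t) c.
Proof.
move=> hs; elim: t => [|t IH] c hc hw /=.
  by apply: hw; rewrite addn0.
have hs' : size (run r s1 t) = size (run r s2 t) by rewrite !size_run.
rewrite (@nth_gstep (r t) (run r s1 t) d) ?size_run // (@nth_gstep (r t) (run r s2 t) d) ?size_run -?hs //.
have hnb : forall k, c <= k.+1 -> k <= c.+1 -> nb (run r s1 t) k = nb (run r s2 t) k.
  move=> k h1 h2; rewrite !(nbE d) -hs' size_run.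
  case: ifP => // hk; congr Some; apply: IH => // e h3 h4; apply: hw; lia.
rewrite IH //; last by move=> e h1 h2; apply: hw; lia.
rewrite (hnb c.+1) //; last lia.
case: c hc hw hnb => [|c] hc hw hnb //.
by rewrite (hnb c) //; lia.
Qed.

End Gen.

Import Order.TTheory GRing.Theory Num.Theory.

Lemma omap_nth_map (A B : Type) (f : A -> B) (s : seq A) k :
  omap f (nth None (map Some s) k) = nth None (map Some (map f s)) k.
Proof. by elim: s k => [|a s IH] [|k] //=. Qed.

Section Amp.
Variables (Sigma : finType) (C : PACA Sigma).

Definition st2 : finType := (st C * st C * bool)%type.
Definition pr1 (t : st2) : st C := t.1.1.
Definition pr2 (t : st2) : st C := t.1.2.
Definition inp2 (a : Sigma) : st2 := (inp C a, inp C a, false).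
Lemma inp2_inj : injective inp2.
Proof. by move=> a b [] /(@inp_inj _ C). Qed.
Definition acc2 : {set st2} :=
  [set t : st2 | if t.2 then t.1.2 \in acc C else t.1.1 \in acc C].
Definition D2 (c : bool) (l : option st2) (q : st2) (r : option st2) : st2 :=
  let del := if c then @delta1 _ C else @delta0 _ C in
  if q.2 then (q.1.1, del (omap pr2 l) q.1.2 (omap pr2 r), false)
  else (del (omap pr1 l) q.1.1 (omap pr1 r), q.1.2, true).
Definition C2 : PACA Sigma := MkPACA inp2_inj acc2 (D2 false) (D2 true).

Definition pack (s1 s2 : seq (st C)) (b : bool) : seq (st C2) :=
  map (fun p => (p.1, p.2, b)) (zip s1 s2).

Lemma size_pack s1 s2 b : size s1 = size s2 -> size (pack s1 s2 b) = size s1.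
Proof. by move=> h; rewrite size_map size_zip h minnn. Qed.

Lemma map_pr1_pack s1 s2 b : size s1 = size s2 -> map pr1 (pack s1 s2 b) = s1.
Proof. by move=> h; rewrite -map_comp /= -/(unzip1 _) unzip1_zip // h. Qed.

Lemma map_pr2_pack s1 s2 b : size s1 = size s2 -> map pr2 (pack s1 s2 b) = s2.
Proof. by move=> h; rewrite -map_comp /= -/(unzip2 _) unzip2_zip // h. Qed.

Lemma nth_pack s1 s2 b d1 d2 b' i : size s1 = size s2 -> i < size s1 ->
  nth (d1, d2, b') (pack s1 s2 b) i = (nth d1 s1 i, nth d2 s2 i, b).
Proof.
by move=> h hi; rewrite (nth_map (d1, d2)) ?size_zip ?h ?minnn -?h // nth_zip.
Qed.

Lemma nb_pack1 s1 s2 b k : size s1 = size s2 ->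
  omap pr1 (nb (pack s1 s2 b) k) = nb s1 k.
Proof. by move=> h; rewrite /nb omap_nth_map map_pr1_pack. Qed.

Lemma nb_pack2 s1 s2 b k : size s1 = size s2 ->
  omap pr2 (nb (pack s1 s2 b) k) = nb s2 k.
Proof. by move=> h; rewrite /nb omap_nth_map map_pr2_pack. Qed.

Lemma gstep_pack0 coin s1 s2 : size s1 = size s2 ->
  gstep (C:=C2) coin (pack s1 s2 false) = pack (gstep coin s1) s2 true.
Proof.
case: s1 s2 => [|a s1] [|a' s2] // h.
have hs : size (a :: s1) = size (a' :: s2) by [].
apply: (@eq_from_nth _ (a, a, false)).
  by rewrite (@size_gstep _ C2) !size_pack ?size_gstep.
move=> i; rewrite (@size_gstep _ C2) size_pack // => hi.
rewrite (@nth_gstep _ C2 coin _ (a, a, false)) ?size_pack //.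
rewrite nth_pack ?size_gstep //.
rewrite nth_pack ?(@size_gstep _ C) // (@nth_gstep _ C coin _ a) //.
rewrite /= /D2 /=.
case: i hi => [|i] hi; case: (coin _) => /=;
  by rewrite ?nb_pack1.
Qed.

Lemma gstep_pack1 coin s1 s2 : size s1 = size s2 ->
  gstep (C:=C2) coin (pack s1 s2 true) = pack s1 (gstep coin s2) false.
Proof.
case: s1 s2 => [|a s1] [|a' s2] // h.
have hs : size (a :: s1) = size (a' :: s2) by [].
apply: (@eq_from_nth _ (a, a, false)).
  by rewrite (@size_gstep _ C2) !size_pack ?size_gstep.
move=> i; rewrite (@size_gstep _ C2) size_pack // => hi.
rewrite (@nth_gstep _ C2 coin _ (a, a, false)) ?size_pack //.
rewrite nth_pack ?size_gstep //.
rewrite nth_pack ?size_gstep -?hs // (@nth_gstep _ C coin _ a) -?hs //.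
rewrite /= /D2 /=.
case: i hi => [|i] hi; case: (coin _) => /=;
  by rewrite ?nb_pack2.
Qed.


Definition r1 (r : nat -> nat -> bool) j := r j.*2.
Definition r2 (r : nat -> nat -> bool) j := r j.*2.+1.

Lemma run_pack r (s : seq (st C)) k :
  run (C:=C2) r (pack s s false) k.*2 = pack (run (r1 r) s k) (run (r2 r) s k) false /\
  run (C:=C2) r (pack s s false) k.*2.+1 = pack (run (r1 r) s k.+1) (run (r2 r) s k) true.
Proof.
elim: k => [|k [IH1 IH2]].
  by split => //=; rewrite gstep_pack0.
have e1 : run (C:=C2) r (pack s s false) k.+1.*2 =
          pack (run (r1 r) s k.+1) (run (r2 r) s k.+1) false.
  by rewrite doubleS /= IH1 gstep_pack0 ?size_run // gstep_pack1 ?size_gstep ?size_run.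
split => //.
have -> : run (C:=C2) r (pack s s false) k.+1.*2.+1 = gstep (r k.+1.*2) (run (C:=C2) r (pack s s false) k.+1.*2) by [].
by rewrite e1 gstep_pack0 // !size_run.
Qed.

Lemma all_acc_pack0 s1 s2 : size s1 = size s2 ->
  all_acc (C:=C2) (pack s1 s2 false) = all_acc s1.
Proof.
move=> h; rewrite /all_acc /pack all_map -[in RHS](@unzip1_zip _ _ s1 s2) ?h //.
by rewrite /unzip1 all_map; apply: eq_all => p; rewrite /= inE.
Qed.

Lemma all_acc_pack1 s1 s2 : size s1 = size s2 ->
  all_acc (C:=C2) (pack s1 s2 true) = all_acc s2.
Proof.
move=> h; rewrite /all_acc /pack all_map -[in RHS](@unzip2_zip _ _ s1 s2) ?h //.
by rewrite /unzip2 all_map; apply: eq_all => p; rewrite /= inE.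
Qed.

Lemma init_C2 x : init C2 x = pack (init C x) (init C x) false.
Proof. by elim: x => //= a x ->. Qed.

Lemma has_time2 T : has_time C T -> has_time C2 (fun n => (T n).*2).
Proof.
move=> HT x hx r j; rewrite init_C2.
have hs : size (init C x) = size (init C x) by [].
move: (odd_double_half j); case: (odd j) => ej; rewrite -ej ?add1n ?add0n.
  rewrite (proj2 (run_pack _ _ _)) all_acc_pack1 ?size_run //.
  move=> /(HT x hx) [k hk ak]; exists k.*2.+1; first by rewrite ltn_Sdouble.
  by rewrite (proj2 (run_pack _ _ _)) all_acc_pack1 ?size_run.
rewrite (proj1 (run_pack _ _ _)) all_acc_pack0 ?size_run //.
move=> /(HT x hx) [k hk ak]; exists k.*2; first by rewrite ltn_double.
by rewrite (proj1 (run_pack _ _ _)) all_acc_pack0 ?size_run.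
Qed.


Definition accn (D : PACA Sigma) (t n : nat) (x : seq Sigma)
  (R : {ffun 'I_t * 'I_n -> bool}) :=
  [exists j : 'I_t, all_acc (run (coins R) (init D x) j)].

Lemma coinsE t n (R : {ffun 'I_t * 'I_n -> bool}) j i (hj : j < t) (hi : i < n) :
  coins R j i = R (Ordinal hj, Ordinal hi).
Proof.
rewrite /coins; case: insubP => [j' _ ej|]; last by rewrite hj.
case: insubP => [i' _ ei|]; last by rewrite hi.
by congr (R (_, _)); apply: val_inj.
Qed.

Lemma coins_out t n (R : {ffun 'I_t * 'I_n -> bool}) j i :
  ~~ ((j < t) && (i < n)) -> coins R j i = false.
Proof.
move=> h; rewrite /coins; case: insubP => [j' hj _|] //.
by case: insubP => [i' hi _|] //; rewrite hj hi in h.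
Qed.

Lemma dbl0P t (j : 'I_t) : j.*2 < t.*2. Proof. by rewrite ltn_double. Qed.
Lemma dbl1P t (j : 'I_t) : j.*2.+1 < t.*2. Proof. by rewrite ltn_Sdouble. Qed.
Lemma halfP t (j : 'I_(t.*2)) : j./2 < t.
Proof. by rewrite -ltn_double; apply: leq_ltn_trans (ltn_ord j); rewrite -{2}(odd_double_half j) leq_addl. Qed.

Definition sp1 t n (R : {ffun 'I_(t.*2) * 'I_n -> bool}) : {ffun 'I_t * 'I_n -> bool} :=
  [ffun p : 'I_t * 'I_n => R (Ordinal (dbl0P p.1), p.2)].
Definition sp2 t n (R : {ffun 'I_(t.*2) * 'I_n -> bool}) : {ffun 'I_t * 'I_n -> bool} :=
  [ffun p : 'I_t * 'I_n => R (Ordinal (dbl1P p.1), p.2)].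
Definition joinf t n (u : {ffun 'I_t * 'I_n -> bool} * {ffun 'I_t * 'I_n -> bool})
  : {ffun 'I_(t.*2) * 'I_n -> bool} :=
  [ffun p : 'I_(t.*2) * 'I_n => if odd p.1 then u.2 (Ordinal (halfP p.1), p.2) else u.1 (Ordinal (halfP p.1), p.2)].

Lemma coins_sp1 t n (R : {ffun 'I_(t.*2) * 'I_n -> bool}) : coins (sp1 R) = r1 (coins R).
Proof.
apply: functional_extensionality => j; apply: functional_extensionality => i.
rewrite /r1; case: (boolP ((j < t) && (i < n))) => [/andP [hj hi]|h].
  rewrite (coinsE _ hj hi) (coinsE _ (dbl0P (Ordinal hj)) hi) ffunE.
  by congr (R (_, _)); apply: val_inj.
rewrite !coins_out //; by rewrite ltn_double.
Qed.

Lemma coins_sp2 t n (R : {ffun 'I_(t.*2) * 'I_n -> bool}) : coins (sp2 R) = r2 (coins R).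
Proof.
apply: functional_extensionality => j; apply: functional_extensionality => i.
rewrite /r2; case: (boolP ((j < t) && (i < n))) => [/andP [hj hi]|h].
  rewrite (coinsE _ hj hi) (coinsE _ (dbl1P (Ordinal hj)) hi) ffunE.
  by congr (R (_, _)); apply: val_inj.
rewrite !coins_out //; by rewrite ltn_Sdouble.
Qed.

Lemma accn2 t n x (R : {ffun 'I_(t.*2) * 'I_n -> bool}) :
  accn C2 x R = accn C x (sp1 R) || accn C x (sp2 R).
Proof.
have hs : size (init C x) = size (init C x) by [].
rewrite /accn coins_sp1 coins_sp2; apply/existsP/orP.
  case=> j; rewrite init_C2; case ho: (odd j).
    have ej : nat_of_ord j = (j./2).*2.+1 by rewrite -[in LHS](odd_double_half j) ho.
    rewrite ej (proj2 (run_pack _ _ _)) all_acc_pack1 ?size_run // => H.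
    by right; apply/existsP; exists (Ordinal (halfP j)).
  have ej : nat_of_ord j = (j./2).*2 by rewrite -[in LHS](odd_double_half j) ho.
  rewrite ej (proj1 (run_pack _ _ _)) all_acc_pack0 ?size_run // => H.
  by left; apply/existsP; exists (Ordinal (halfP j)).
case=> /existsP [k Hk].
  exists (Ordinal (dbl0P k)); rewrite init_C2.
  by rewrite (proj1 (run_pack _ _ _)) all_acc_pack0 ?size_run.
exists (Ordinal (dbl1P k)); rewrite init_C2.
by rewrite (proj2 (run_pack _ _ _)) all_acc_pack1 ?size_run.
Qed.


Lemma sp1_join t n u : sp1 (@joinf t n u) = u.1.
Proof.
apply/ffunP => -[j i]; rewrite !ffunE /= odd_double.
by congr (u.1 (_, _)); apply: val_inj; rewrite /= doubleK.
Qed.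

Lemma sp2_join t n u : sp2 (@joinf t n u) = u.2.
Proof.
apply/ffunP => -[j i]; rewrite !ffunE /= ?oddS odd_double /=.
by congr (u.2 (_, _)); apply: val_inj; rewrite /= uphalf_double.
Qed.

Lemma join_sp t n (R : {ffun 'I_(t.*2) * 'I_n -> bool}) : joinf (sp1 R, sp2 R) = R.
Proof.
apply/ffunP => -[j i]; rewrite !ffunE /=; case ho: (odd j); rewrite ?ffunE;
  congr (R (_, _)); apply: val_inj => /=; rewrite -[RHS](odd_double_half j) ho //.
Qed.

Lemma card_acc2 t n x :
  #|[set R : {ffun 'I_(t.*2) * 'I_n -> bool} | accn C2 x R]| +
  #|[set R : {ffun 'I_t * 'I_n -> bool} | accn C x R]| ^ 2 =
  2 * #|[set R : {ffun 'I_t * 'I_n -> bool} | accn C x R]| * 2 ^ (t * n).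
Proof.
set S := [set R : {ffun 'I_t * 'I_n -> bool} | accn C x R].
have e : [set R : {ffun 'I_(t.*2) * 'I_n -> bool} | accn C2 x R] =
         (@joinf t n) @: (setX S setT :|: setX setT S).
  apply/setP => R; rewrite inE accn2; apply/idP/imsetP.
    move=> h; exists (sp1 R, sp2 R); last by rewrite join_sp.
    by rewrite !inE /= !andbT.
  by case=> u hu ->; rewrite sp1_join sp2_join; move: hu; rewrite !inE !andbT.
have inj : injective (@joinf t n).
  apply: (@can_inj _ _ _ (fun R => (sp1 R, sp2 R))) => -[u1 u2].
  by rewrite sp1_join sp2_join.
rewrite e card_imset //.
have eI : setX S setT :&: setX setT S = setX S S.
  by apply/setP => -[u v]; rewrite !inE /= ?andbT ?andTb.
have := cardsUI (setX S setT) (setX setT S).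
rewrite eI !cardsX cardsT card_ffun card_bool card_prod !card_ord => ->.
lia.
Qed.

End Amp.

Lemma ratlem (a c N : nat) : (0 < N)%N -> (c + a ^ 2 = 2 * a * N)%N ->
  ((c%:R / (N * N)%:R : rat) = 2 * (a%:R / N%:R) - (a%:R / N%:R) ^+ 2)%R.
Proof.
move=> hN he.
have hc : (c%:R : rat) = (2 * a%:R * N%:R - a%:R ^+ 2)%R.
  apply/eqP; rewrite eq_sym subr_eq -natrX -!natrM -natrD he.
  by rewrite !natrM.
have hN' : (N%:R : rat) != 0%R by rewrite pnatr_eq0 -lt0n.
rewrite hc natrM; field; exact: hN'.
Qed.

Lemma part1 : forall (Sigma : finType) (C : PACA Sigma) (T : nat -> nat) (L : seq Sigma -> Prop),
      one_sided C T L ->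
      exists (C' : PACA Sigma) (T' : nat -> nat), two_sided C' T' L /\ bigO T' T.
Proof.
move=> Sigma C T L [HT HL]; exists (C2 C), (fun n => (T n).*2); split; last first.
  by exists 2, 0 => n _ _; rewrite -mul2n.
split; first exact: has_time2.
move=> x hx; have [h1 h2] := HL x hx.
have hc := card_acc2 C (T (size x)) (size x) x.
have ep : acc_prob C T x = (#|[set R : {ffun 'I_(T (size x)) * 'I_(size x) -> bool} | accn C x R]|%:R
   / (2 ^ (T (size x) * size x))%:R)%R by [].
have ep2 : acc_prob (C2 C) (fun n => (T n).*2) x =
   (#|[set R : {ffun 'I_((T (size x)).*2) * 'I_(size x) -> bool} | accn (C2 C) x R]|%:R
   / (2 ^ (T (size x) * size x) * 2 ^ (T (size x) * size x))%:R)%R.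
  have eN : (2 ^ ((T (size x)).*2 * size x) = 2 ^ (T (size x) * size x) * 2 ^ (T (size x) * size x))%N.
    by rewrite -expnD addnn -!mul2n mulnA.
  by rewrite /acc_prob; congr (_ / _)%R; rewrite eN.
rewrite ep in h1 h2; rewrite ep2.
have hN : (0 < 2 ^ (T (size x) * size x))%N by rewrite expn_gt0.
have ha : (#|[set R : {ffun 'I_(T (size x)) * 'I_(size x) -> bool} | accn C x R]| <= 2 ^ (T (size x) * size x))%N.
  by apply: leq_trans (max_card _) _; rewrite card_ffun card_bool card_prod !card_ord.
move: hc h1 h2 ha hN.
set a := #|[set R : {ffun 'I_(T (size x)) * 'I_(size x) -> bool} | accn C x R]|.
set c := #|_|.
set N := 2 ^ _.
move=> hc h1 h2 ha hN.
rewrite (ratlem hN hc).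
have hp0 : (0 <= (a%:R / N%:R : rat))%R by apply: divr_ge0.
have hp1 : ((a%:R / N%:R : rat) <= 1)%R.
  by rewrite ler_pdivrMr ?ltr0n // mul1r ler_nat.
set p := (a%:R / N%:R : rat) in h1 h2 hp0 hp1 *.
case: (Classical_Prop.classic (L x)) => hL.
  have hp : (1 / 2 <= p)%R by move/h1: hL; rewrite (_ : 1 - 1/2 = 1/2 :> rat)%R //.
  split.
    by split => [_|h]; [nra | exact hL].
  by split => h; [exfalso; apply: h | exfalso; nra].
have hp : p = 0%R by apply/h2.
rewrite hp; split.
  by split => h; [exfalso; apply: hL | exfalso; lra].
by split => h; [lra | exact hL].
Qed.

Definition Lone (x : seq bool) : Prop := forall i j, nth false x i -> nth false x j -> i = j.

Lemma acc_prob_n (Sigma : finType) (D : PACA Sigma) T x n : size x = n ->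
  acc_prob D T x = (#|[set R : {ffun 'I_(T n) * 'I_n -> bool} | accn D x R]|%:R
   / (2 ^ (T n * n))%:R)%R.
Proof. by move=> <-. Qed.

Lemma nth_mk f n e : nth false (mkseq f n) e = (e < n) && f e.
Proof.
case: ltnP => h; first by rewrite nth_mkseq.
by rewrite nth_default // size_mkseq.
Qed.

Lemma nth_init (Sigma : finType) (D : PACA Sigma) (x : seq Sigma) d e :
  nth (inp D d) (init D x) e = inp D (nth d x e).
Proof.
case: (ltnP e (size x)) => h; first by rewrite (nth_map d).
by rewrite !nth_default // size_map.
Qed.

Lemma card_sum (T : finType) (P : pred T) : #|[set x | P x]| = (\sum_x (P x : nat))%N.
Proof. rewrite -(sum1dep_card P). by rewrite big_mkcond; apply: eq_bigr => x _; case: (P x). Qed.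

Section Lower.
Variables (C : PACA bool) (t n : nat).
Hypothesis hn : 4 * t * (t + 1) < n.

Definition pos (i : nat) := t.*2 * i.
Definition yw i := mkseq (fun e => e == pos i) n.
Definition xw i i' := mkseq (fun e => (e == pos i) || (e == pos i')) n.
Lemma size_yw i : size (yw i) = n. Proof. exact: size_mkseq. Qed.
Lemma size_xw i i' : size (xw i i') = n. Proof. exact: size_mkseq. Qed.

Lemma size_iyw i : size (init C (yw i)) = n. Proof. by rewrite /init size_map size_yw. Qed.
Lemma size_ixw i i' : size (init C (xw i i')) = n. Proof. by rewrite /init size_map size_xw. Qed.

Definition Acc (w : seq bool) (R : {ffun 'I_t * 'I_n -> bool}) (j : nat) :=
  all_acc (run (coins R) (init C w) j).

Lemma glue R (j : 'I_t) i i' : i != i' ->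
  Acc (yw i) R j -> Acc (yw i') R j -> Acc (xw i i') R j.
Proof.
move=> hii; have sep : (pos i + t.*2 <= pos i') || (pos i' + t.*2 <= pos i).
  rewrite /pos; case: (ltngtP i i') hii => // h _; nia.
have hj := ltn_ord j.
rewrite /Acc /all_acc => /(all_nthP (inp C false)) H1 /(all_nthP (inp C false)) H2.
apply/(all_nthP (inp C false)) => c; rewrite size_run size_ixw => hc.
case: (boolP ((c <= pos i' + j) && (pos i' <= c + j))) => hw.
  rewrite (@run_local _ C (coins R) _ (init C (yw i')) _ j) ?size_iyw ?size_ixw //.
    by apply: H2; rewrite size_run size_iyw.
  move=> e h1 h2; rewrite !nth_init !nth_mk; congr (inp C _); congr (_ && _).
  have : e != pos i by apply/eqP => ei; move: hw sep h1 h2 hj; rewrite ei; lia.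
  by move/negbTE => ->.
rewrite (@run_local _ C (coins R) _ (init C (yw i)) _ j) ?size_iyw ?size_ixw //.
  by apply: H1; rewrite size_run size_iyw.
move=> e h1 h2; rewrite !nth_init !nth_mk; congr (inp C _); congr (_ && _).
have : e != pos i' by apply/eqP => ei; rewrite ei in h1 h2; rewrite h1 h2 in hw.
by move/negbTE => ->; rewrite orbF.
Qed.


Definition mm := t.*2.+3.

Lemma count_bound
  (H : forall R (j : 'I_t) (i i' : 'I_mm), i != i' -> Acc (yw i) R j -> Acc (yw i') R j -> False)
  (R : {ffun 'I_t * 'I_n -> bool}) :
  #|[set i : 'I_mm | accn C (yw i) R]| <= t.+1.
Proof.
pose f (i : 'I_mm) : option 'I_t := [pick j : 'I_t | Acc (yw i) R j].
rewrite -(@card_in_imset _ _ f); last first.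
  move=> i1 i2; rewrite !inE => /existsP [j1 h1] _ ef.
  apply/eqP; apply/negPn/negP => hne.
  move: ef; rewrite /f; case: pickP => [k hk|]; last by move/(_ j1); rewrite /Acc h1.
  case: pickP => [k' hk' [ekk]|] //.
  by apply: (H R k i1 i2 hne) => //; rewrite ekk.
apply: leq_trans (max_card _) _.
by rewrite card_option card_ord.
Qed.

Lemma lower_contra
  (Hmem : forall i : 'I_mm, 2 ^ (t * n) <= 2 * #|[set R : {ffun 'I_t * 'I_n -> bool} | accn C (yw i) R]|)
  (H : forall R (j : 'I_t) (i i' : 'I_mm), i != i' -> Acc (yw i) R j -> Acc (yw i') R j -> False) :
  False.
Proof.
have e : \sum_(i : 'I_mm) #|[set R : {ffun 'I_t * 'I_n -> bool} | accn C (yw i) R]| =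
         \sum_(R : {ffun 'I_t * 'I_n -> bool}) #|[set i : 'I_mm | accn C (yw i) R]|.
  under eq_bigr => i _ do rewrite (card_sum (fun R => accn C (yw i) R)).
  rewrite exchange_big /=.
  by apply: eq_bigr => R _; rewrite (card_sum (fun i : 'I_mm => accn C (yw i) R)).
have h1 : \sum_(i : 'I_mm) 2 ^ (t * n) <= 2 * \sum_(i : 'I_mm) #|[set R : {ffun 'I_t * 'I_n -> bool} | accn C (yw i) R]|.
  by rewrite big_distrr /=; apply: leq_sum => i _; apply: Hmem.
have h2 : \sum_(R : {ffun 'I_t * 'I_n -> bool}) #|[set i : 'I_mm | accn C (yw i) R]| <=
          \sum_(R : {ffun 'I_t * 'I_n -> bool}) t.+1.
  by apply: leq_sum => R _; apply: count_bound.
have cT : forall (T : finType), #|(xpredT : pred T)| = #|T| by move=> T; apply: eq_card.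
rewrite e sum_nat_const cT card_ord in h1.
rewrite sum_nat_const cT card_ffun card_bool card_prod !card_ord in h2.
have hN : 0 < 2 ^ (t * n) by rewrite expn_gt0.
move: h1 h2 hN; rewrite /mm; set N := 2 ^ (t * n); nia.
Qed.

End Lower.

Lemma part2neg : ~ (exists (C : PACA bool) (T : nat -> nat), one_sided C T Lone /\ little_o_sqrt T).
Proof.
case=> C [T [[HT HL] Ho]].
have [N0 HN0] := Ho 4 isT.
have h := HN0 N0.+1 (leqnSn _).
move: h; set n := N0.+1; set t := T n => h.
rewrite expnS expn1 in h.
have hn : 4 * t * (t + 1) < n.
  case: (posnP t) => [t0|tp]; first by rewrite t0 /n; lia.
  nia.
have hN : (0 < 2 ^ (t * n))%N by rewrite expn_gt0.
have posn : forall i : 'I_(mm t), pos t i < n.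
  move=> i; have hi := ltn_ord i; move: (nat_of_ord i) hi; rewrite /mm /pos => k; rewrite -!mul2n => hk; nia.
apply: (@lower_contra C t n hn).
- move=> i.
  have hy : Lone (yw t n i).
    by move=> a b; rewrite !nth_mk => /andP [_ /eqP ->] /andP [_ /eqP ->].
  have hsz : 0 < size (yw t n i) by rewrite size_yw.
  have [h1 _] := HL (yw t n i) hsz.
  move: (proj1 h1 hy); rewrite (acc_prob_n _ _ (size_yw t n i)) -/t.
  set a := #|_| => ha.
  have : ((2 ^ (t * n))%:R <= (2 * a)%:R :> rat)%R.
    rewrite natrM; move: ha; rewrite ler_pdivlMr ?ltr0n //.
    move=> hh; lra.
  by rewrite ler_nat.
- move=> R j i i' hne A1 A2.
  have ht : 0 < t by apply: leq_ltn_trans (ltn_ord j).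
  have hx := glue hn hne A1 A2.
  have nL : ~ Lone (xw t n i i').
    move=> hL; have := hL (pos t i) (pos t i').
    rewrite !nth_mk !posn !eqxx /= orbT => /(_ isT isT) /eqP.
    rewrite /pos eqn_mul2l double_eq0 (negbTE (lt0n_neq0 ht)) /= => ei.
    by move: hne; rewrite -(inj_eq val_inj) ei.
  have hsz : 0 < size (xw t n i i') by rewrite size_xw.
  have [_ [h2 _]] := HL (xw t n i i') hsz.
  move: (h2 nL); rewrite (acc_prob_n _ _ (size_xw t n i i')) -/t.
  move/eqP; rewrite mulf_eq0 invr_eq0 !pnatr_eq0 => /orP []; last by rewrite expn_eq0.
  rewrite cards_eq0 => /eqP e.
  have : R \in [set R : {ffun 'I_t * 'I_n -> bool} | accn C (xw t n i i') R].
    by rewrite inE; apply/existsP; exists j.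
  by rewrite e inE.
Qed.

Definition flip (D : finType) (a : D) (R : {ffun D -> bool}) : {ffun D -> bool} :=
  [ffun z => if z == a then ~~ R z else R z].

Lemma flipK (D : finType) (a : D) : involutive (flip a).
Proof. by move=> R; apply/ffunP => z; rewrite !ffunE; case: eqP => // _; rewrite negbK. Qed.

Lemma card_half (D : finType) (a : D) (Q : pred {ffun D -> bool}) :
  (forall R, Q (flip a R) = Q R) -> forall b,
  (2 * #|[set R | Q R && (R a == b)]| = #|[set R | Q R]|)%N.
Proof.
move=> HQ b.
have e : [set R | Q R && (R a == ~~ b)] = flip a @^-1: [set R | Q R && (R a == b)].
  apply/setP => R; rewrite !inE HQ ffunE eqxx.
  by case: (R a); case: b.
have e2 := card_preimset [set R | Q R && (R a == b)] (inv_inj (flipK a)).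
rewrite -e in e2.
have := cardsID [set R : {ffun D -> bool} | R a == b] [set R | Q R].
have -> : [set R | Q R] :&: [set R : {ffun D -> bool} | R a == b] = [set R | Q R && (R a == b)].
  by apply/setP => R; rewrite !inE.
have -> : [set R | Q R] :\: [set R : {ffun D -> bool} | R a == b] = [set R | Q R && (R a == ~~ b)].
  by apply/setP => R; rewrite !inE andbC; by case: (R a); case: (b).
by rewrite e2 => <-; rewrite mul2n addnn.
Qed.

Lemma card_fix (D : finType) (s : seq (D * bool)) : uniq (map fst s) ->
  (2 ^ size s * #|[set R : {ffun D -> bool} | all (fun ab => R ab.1 == ab.2) s]| = 2 ^ #|D|)%N.
Proof.
elim: s => [|[a b] s IH] /=.
  move=> _; rewrite mul1n.
  have -> : [set R : {ffun D -> bool} | true] = setT by apply/setP => R; rewrite !inE.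
  by rewrite cardsT card_ffun card_bool.
move=> /andP [ha hu].
have HQ : forall R, all (fun ab => flip a R ab.1 == ab.2) s = all (fun ab => R ab.1 == ab.2) s.
  move=> R; apply: eq_in_all => -[z c] hz /=; rewrite ffunE.
  case: (z =P a) => // ez; exfalso; move/negP: ha; apply; rewrite -ez.
  by apply/mapP; exists (z, c).
have := @card_half D a (fun R : {ffun D -> bool} => all (fun ab => R ab.1 == ab.2) s) HQ b.
have -> : [set R : {ffun D -> bool} | all (fun ab => R ab.1 == ab.2) s && (R a == b)] =
          [set R : {ffun D -> bool} | (R a == b) && all (fun ab => R ab.1 == ab.2) s].
  by apply/setP => R; rewrite !inE andbC.
move=> e; rewrite expnS -mulnA mulnCA e; exact: IH.
Qed.

Definition fstep (c : bool) (s : 'I_6) : 'I_6 :=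
  inord (match nat_of_ord s with 0 => 0 | 1 => if c then 3 else 2 | 3 => if c then 5 else 4 | _ => 5 end).
Definition inp0 (b : bool) : 'I_6 := inord (nat_of_bool b).
Lemma inp0_inj : injective inp0.
Proof. by case; case => // /(congr1 (@nat_of_ord 6)); rewrite /inp0 !inordK. Qed.
Definition acc0 : {set 'I_6} := [set s : 'I_6 | nat_of_ord s \in [:: 0; 2; 4]].
Definition CC : PACA bool :=
  MkPACA inp0_inj acc0 (fun _ q _ => fstep false q) (fun _ q _ => fstep true q).

Fixpoint cr (r : nat -> nat -> bool) (i : nat) (q : 'I_6) (t : nat) : 'I_6 :=
  if t is t'.+1 then fstep (r t' i) (cr r i q t') else q.

Lemma nth_runC r (s : seq 'I_6) t i : i < size s ->
  nth (inp0 false) (run (C:=CC) r s t) i = cr r i (nth (inp0 false) s i) t.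
Proof.
move=> hi; elim: t => //= t IH.
rewrite (@nth_gstep _ CC (r t) _ (inp0 false)) ?size_run // IH.
by case: (r t i).
Qed.

Lemma fstepE c s : @nat_of_ord 6 (fstep c s) =
  match nat_of_ord s with 0 => 0 | 1 => if c then 3 else 2 | 3 => if c then 5 else 4 | _ => 5 end.
Proof.
rewrite /fstep inordK //.
by case: (nat_of_ord s) => [|[|[|[|]]]] //; case: c.
Qed.

Lemma inp0E b : @nat_of_ord 6 (inp0 b) = b.
Proof. by rewrite /inp0 inordK //; case: b. Qed.

Lemma cr_false r i t : @nat_of_ord 6 (cr r i (inp0 false) t) = 0%N.
Proof. elim: t => [|t IH] /=; first by rewrite /inp0 inordK. by rewrite /fstep IH inordK. Qed.

Lemma cr_true3 r i t : @nat_of_ord 6 (cr r i (inp0 true) t.+3) = 5%N.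
Proof.
elim: t => [|t IH].
  by rewrite /= !fstepE inp0E /=; case: (r 0 i); case: (r 1 i); case: (r 2 i).
by rewrite [cr _ _ _ _]/= fstepE IH.
Qed.

Definition acell r i t := cr r i (inp0 true) t \in acc0.

Lemma acellE r i t : acell r i t =
  match t with 1 => ~~ r 0 i | 2 => r 0 i && ~~ r 1 i | _ => false end.
Proof.
rewrite /acell inE; case: t => [|[|[|t]]].
- by rewrite /= inp0E.
- by rewrite /= !fstepE inp0E /=; case: (r 0 i).
- by rewrite /= !fstepE inp0E /=; case: (r 0 i); case: (r 1 i).
- by rewrite cr_true3.
Qed.

Lemma all_accC r (x : seq bool) t :
  all_acc (run (C:=CC) r (init CC x) t) = [forall i : 'I_(size x), nth false x i ==> acell r i t].
Proof.
apply/(all_nthP (inp0 false))/forallP.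
  move=> h i; apply/implyP => hx; have := h i; rewrite (@size_run _ CC) size_map ltn_ord => /(_ isT).
  by rewrite nth_runC ?size_map // (@nth_init _ CC x false i) hx.
move=> h i; rewrite (@size_run _ CC) size_map => hi; rewrite nth_runC ?size_map //.
rewrite (@nth_init _ CC x false i); case hx: (nth false x i).
  by have := h (Ordinal hi); rewrite /= hx.
by rewrite inE cr_false.
Qed.

Lemma accnC x (R : {ffun 'I_3 * 'I_(size x) -> bool}) :
  accn CC x R = [exists j : 'I_3, [forall i : 'I_(size x), nth false x i ==> acell (coins R) i j]].
Proof. by apply: eq_existsb => j; rewrite /accn all_accC. Qed.

Lemma caseA x : (forall i, nth false x i = false) ->
  #|[set R : {ffun 'I_3 * 'I_(size x) -> bool} | accn CC x R]| = 2 ^ (3 * size x).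
Proof.
move=> h.
have -> : [set R : {ffun 'I_3 * 'I_(size x) -> bool} | accn CC x R] = setT.
  apply/setP => R; rewrite !inE accnC; apply/existsP; exists ord0.
  by apply/forallP => i; rewrite h.
by rewrite cardsT card_ffun card_bool card_prod !card_ord.
Qed.

Lemma caseB x p (hp : p < size x) : (forall i, nth false x i = (i == p)) ->
  4 * #|[set R : {ffun 'I_3 * 'I_(size x) -> bool} | accn CC x R]| = 3 * 2 ^ (3 * size x).
Proof.
move=> h.
pose a0 : 'I_3 * 'I_(size x) := (@Ordinal 3 0 isT, Ordinal hp).
pose a1 : 'I_3 * 'I_(size x) := (@Ordinal 3 1 isT, Ordinal hp).
set S := [set R : {ffun 'I_3 * 'I_(size x) -> bool} | all (fun ab => R ab.1 == ab.2) [:: (a0, true); (a1, true)]].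
have e : [set R : {ffun 'I_3 * 'I_(size x) -> bool} | accn CC x R] = ~: S.
  apply/setP => R; rewrite !inE accnC /= andbT !eqb_id.
  have c0 : coins R 0 p = R a0 by rewrite (coinsE R (isT : 0 < 3) hp).
  have c1 : coins R 1 p = R a1 by rewrite (coinsE R (isT : 1 < 3) hp).
  apply/existsP/idP.
    case=> j /forallP /(_ (Ordinal hp)); rewrite /= h eqxx /= acellE.
    by case: j => [[|[|[|j]]] hj] //=; rewrite ?c0 ?c1; case: (R a0); case: (R a1).
  case ha: (R a0) => /= hb.
    exists (@Ordinal 3 2 isT); apply/forallP => i; rewrite h acellE /=.
    by apply/implyP => /eqP ->; rewrite c0 c1 ha /=.
  exists (@Ordinal 3 1 isT); apply/forallP => i; rewrite h acellE /=.
  by apply/implyP => /eqP ->; rewrite c0 ha.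
have hS := card_fix (s := [:: (a0, true); (a1, true)]) isT.
have hC := cardsC S.
rewrite e; move: hS hC; rewrite /= card_ffun card_bool card_prod !card_ord -/S.
move=> hS hC.
have hT : #|[set: {ffun 'I_3 * 'I_(size x) -> bool}]| = 2 ^ (3 * size x).
  by rewrite cardsT card_ffun card_bool card_prod !card_ord.
rewrite expnS expn1 in hS.
lia.
Qed.

Lemma pair_neq (n : nat) (j1 j2 : 'I_3) (i1 i2 : 'I_n) :
  (nat_of_ord j1 != j2) || (nat_of_ord i1 != i2) -> (j1, i1) != (j2, i2).
Proof.
case/orP => h; apply/eqP => -[e1 e2].
  by rewrite e1 eqxx in h.
by rewrite e2 eqxx in h.
Qed.

Lemma caseC x p q (hp : p < size x) (hq : q < size x) : p != q ->
  nth false x p -> nth false x q ->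
  16 * #|[set R : {ffun 'I_3 * 'I_(size x) -> bool} | accn CC x R]| <= 5 * 2 ^ (3 * size x).
Proof.
move=> hpq xp xq.
pose a0 : 'I_3 * 'I_(size x) := (@Ordinal 3 0 isT, Ordinal hp).
pose a1 : 'I_3 * 'I_(size x) := (@Ordinal 3 1 isT, Ordinal hp).
pose b0 : 'I_3 * 'I_(size x) := (@Ordinal 3 0 isT, Ordinal hq).
pose b1 : 'I_3 * 'I_(size x) := (@Ordinal 3 1 isT, Ordinal hq).
set A := [set R : {ffun 'I_3 * 'I_(size x) -> bool} |
           all (fun ab => R ab.1 == ab.2) [:: (a0, false); (b0, false)]].
set B := [set R : {ffun 'I_3 * 'I_(size x) -> bool} |
           all (fun ab => R ab.1 == ab.2) [:: (a0, true); (a1, false); (b0, true); (b1, false)]].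
have hsub : [set R : {ffun 'I_3 * 'I_(size x) -> bool} | accn CC x R] \subset A :|: B.
  apply/subsetP => R; rewrite !inE accnC /= !andbT.
  have c0 : coins R 0 p = R a0 by rewrite (coinsE R (isT : 0 < 3) hp).
  have c1 : coins R 1 p = R a1 by rewrite (coinsE R (isT : 1 < 3) hp).
  have d0 : coins R 0 q = R b0 by rewrite (coinsE R (isT : 0 < 3) hq).
  have d1 : coins R 1 q = R b1 by rewrite (coinsE R (isT : 1 < 3) hq).
  case/existsP => j /forallP hj.
  move: (hj (Ordinal hp)) (hj (Ordinal hq)); rewrite /= xp xq /= !acellE.
  case: j {hj} => [[|[|[|j]]] hj] //=; rewrite ?c0 ?c1 ?d0 ?d1;
  by case: (R a0); case: (R a1); case: (R b0); case: (R b1).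
have hA := card_fix (s := [:: (a0, false); (b0, false)]).
have hB := card_fix (s := [:: (a0, true); (a1, false); (b0, true); (b1, false)]).
rewrite card_prod !card_ord -/A in hA; rewrite card_prod !card_ord -/B in hB.
have uA : uniq (map fst [:: (a0, false); (b0, false)]).
  by rewrite /= inE andbT; apply: pair_neq => /=.
have uB : uniq (map fst [:: (a0, true); (a1, false); (b0, true); (b1, false)]).
  have hqp : q != p by rewrite eq_sym.
  rewrite /= !inE !negb_or !andbT.
  by repeat (apply/andP; split); apply: pair_neq => /=; rewrite ?hpq ?hqp ?orbT.
move: (hA uA) (hB uB) => {}hA {}hB.
have := subset_leq_card hsub.
have := cardsUI A B.
rewrite !expnS expn0 in hA hB.
lia.
Qed.

Lemma has_timeCC : has_time CC (fun _ => 3).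
Proof.
move=> x hx r j; rewrite all_accC => /forallP h.
case: j h => [|[|[|j]]] h.
- by exists 0 => //; rewrite all_accC; apply/forallP.
- by exists 1 => //; rewrite all_accC; apply/forallP.
- by exists 2 => //; rewrite all_accC; apply/forallP.
exists 0 => //; rewrite all_accC; apply/forallP => i; have := h i.
by rewrite !acellE.
Qed.

Lemma part2pos : two_sided CC (fun _ => 3) Lone.
Proof.
split; first exact: has_timeCC.
move=> x hx.
have ep : acc_prob CC (fun _ => 3) x =
  (#|[set R : {ffun 'I_3 * 'I_(size x) -> bool} | accn CC x R]|%:R / (2 ^ (3 * size x))%:R)%R by [].
rewrite ep.
have hN : (0 < 2 ^ (3 * size x))%N by rewrite expn_gt0.
have hN' : ((2 ^ (3 * size x))%:R : rat) != 0%R by rewrite pnatr_eq0 -lt0n.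
case: (classic (Lone x)) => hL.
  case: (classic (exists p, nth false x p)) => [[p hp] | hno].
    have hps : p < size x by case: ltnP hp => // h; rewrite nth_default.
    have h : forall i, nth false x i = (i == p).
      move=> i; case hi: (nth false x i).
        by rewrite (hL _ _ hi hp) eqxx.
      by case: eqP => // ei; rewrite ei hp in hi.
    have hB := caseB hps h.
    have e : ((#|[set R : {ffun 'I_3 * 'I_(size x) -> bool} | accn CC x R]|%:R /
              (2 ^ (3 * size x))%:R) = 3 / 4 :> rat)%R.
      have := congr1 (fun n : nat => (n%:R : rat)) hB; rewrite /= !natrM => hB'.
      have -> : (#|[set R : {ffun 'I_3 * 'I_(size x) -> bool} | accn CC x R]|%:R = 3 / 4 * (2 ^ (3 * size x))%:R :> rat)%R by lra.
      by rewrite mulfK.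
    rewrite e; split.
      by split => _; [lra | exact hL].
    by split => h0; [exfalso; exact: h0 hL | exfalso; lra].
  have h : forall i, nth false x i = false.
    by move=> i; apply/negbTE/negP => hi; apply: hno; exists i.
  rewrite (caseA h) (divff hN').
  split.
    by split => _; [lra | exact hL].
  by split => h0; [exfalso; exact: h0 hL | exfalso; lra].
have [i hi] := not_all_ex_not _ _ hL.
have [j hj] := not_all_ex_not _ _ hi.
have xi : nth false x i by apply: NNPP => hn; apply: hj => hh; contradiction.
have xj : nth false x j by apply: NNPP => hn; apply: hj => hh hh'; contradiction.
have hij : i != j by apply/eqP => e; apply: hj => _ _.
have his : i < size x by case: ltnP xi => // h; rewrite nth_default.
have hjs : j < size x by case: ltnP xj => // h; rewrite nth_default.
have hC := caseC his hjs hij xi xj.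
have hle : ((#|[set R : {ffun 'I_3 * 'I_(size x) -> bool} | accn CC x R]|%:R /
            (2 ^ (3 * size x))%:R) <= 5 / 16 :> rat)%R.
  move: hC; rewrite -(@ler_nat rat) !natrM => hC.
  rewrite ler_pdivrMr ?ltr0n //; lra.
split.
  by split => h0; [exfalso; exact: hL h0 | exfalso; lra].
by split => _; [lra | exact hL].
Qed.


Theorem theorem1 :
  (forall (Sigma : finType) (C : PACA Sigma) (T : nat -> nat) (L : seq Sigma -> Prop),
      one_sided C T L ->
      exists (C' : PACA Sigma) (T' : nat -> nat), two_sided C' T' L /\ bigO T' T)
  /\
  (exists (Sigma : finType) (L : seq Sigma -> Prop),
      (exists (C : PACA Sigma) (k : nat), two_sided C (fun _ => k) L) /\
      ~ (exists (C : PACA Sigma) (T : nat -> nat), one_sided C T L /\ little_o_sqrt T)).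
Proof.
split; first exact: part1.
exists bool, Lone; split; last exact: part2neg.
by exists CC, 3; exact: part2pos.
Qed.
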